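(* Let $R$ be an integral domain and $f\in R[[X]]$. (1) If $f$ is irreducible in $R[[X]]$, then $(f_0)\neq R$, and for any $a,b\in R$ with $f_0=ab$ and $(a,b)=R$ one has $(a)=R$ or $(b)=R$. Conversely, if $(f_1)=R$, $(f_0)\ne R$, and for all $a,b\in R$ with $f_0=ab$ and $(a,b)=R$ one has $(a)=R$ or $(b)=R$, then $f$ is irreducible in $R[[X]]$. (2) If $R$ is a PID and $f$ is irreducible in $R[[X]]$, then either $(f)=(X)$ or $f_0$ is associate to a power of a prime element of $R$. (3) If $R$ is a UFD but not a PID, then there exist irreducible elements of $R[[X]]$ whose constant term is neither zero nor associate to a power of a prime; in fact, if $\pi,\sigma\in R$ are nonassociate primes with $(\pi,\sigma)\neq R$, then $\pi\sigma+XU$ is irreducible in $R[[X]]$ for every unit $U\in R[[X]]$.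
   Context: $f_i$ denotes the coefficient of $X^i$ in $f$. A nonzero element $a$ is prime if $(a)$ is a prime ideal. *)

(* Defs.v *)
From mathcomp Require Import all_boot all_order all_algebra.
Set Implicit Arguments. Unset Strict Implicit. Unset Printing Implicit Defensive.
Import Order.TTheory GRing.Theory Num.Theory.
Local Open Scope ring_scope.

Section Defs.
Variable R : idomainType.

Definition powser := nat -> R.
Definition ps_eq (f g : powser) : Prop := forall n, f n = g n.
Definition ps_C (c : R) : powser := fun n => if n == 0%N then c else 0.
Definition ps_zero : powser := ps_C 0.
Definition ps_one : powser := ps_C 1.
Definition ps_X : powser := fun n => if n == 1%N then 1 else 0.
Definition ps_add (f g : powser) : powser := fun n => f n + g n.
Definition ps_mul (f g : powser) : powser :=
  fun n => \sum_(i < n.+1) f i * g (n - i)%N.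

Definition ps_unit (f : powser) : Prop := exists g, ps_eq (ps_mul f g) ps_one.
Definition ps_irreducible (f : powser) : Prop :=
  ~ ps_eq f ps_zero /\ ~ ps_unit f /\
  forall g h, ps_eq f (ps_mul g h) -> ps_unit g \/ ps_unit h.
Definition ps_assoc (f g : powser) : Prop :=
  exists u, ps_unit u /\ ps_eq f (ps_mul u g).

Definition rdvd (a b : R) : Prop := exists c, b = c * a.
Definition rassoc (a b : R) : Prop := exists u, u \is a GRing.unit /\ a = u * b.
Definition comaximal (a b : R) : Prop := exists u v, u * a + v * b = 1.
Definition prime_elt (a : R) : Prop :=
  a != 0 /\ a \isn't a GRing.unit /\
  forall x y, rdvd a (x * y) -> rdvd a x \/ rdvd a y.
Definition irreducible_elt (a : R) : Prop :=
  a != 0 /\ a \isn't a GRing.unit /\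
  forall b c, a = b * c -> b \is a GRing.unit \/ c \is a GRing.unit.

Definition is_ideal (I : R -> Prop) : Prop :=
  I 0 /\ (forall x y, I x -> I y -> I (x + y)) /\ (forall r x, I x -> I (r * x)).
Definition is_PID : Prop :=
  forall I, is_ideal I -> exists a, forall x, I x <-> rdvd a x.
Definition all_irr (s : seq R) : Prop := forall p, p \in s -> irreducible_elt p.
Definition is_UFD : Prop :=
  (forall a, a != 0 -> a \isn't a GRing.unit ->
     exists s : seq R, all_irr s /\ a = \prod_(p <- s) p) /\
  (forall s t : seq R, all_irr s -> all_irr t ->
     rassoc (\prod_(p <- s) p) (\prod_(p <- t) p) ->
     size s = size t /\
     exists sigma : 'I_(size s) -> 'I_(size t), bijective sigma /\
       forall i : 'I_(size s), rassoc (nth 0 s i) (nth 0 t (sigma i))).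
End Defs.

(* Main.v *)
Require Import Defs.
From mathcomp Require Import all_boot all_order all_algebra.
From mathcomp Require Import zify ring.
From Stdlib Require Import Classical ClassicalEpsilon.
Import GRing.Theory.
Local Open Scope ring_scope.
Set Implicit Arguments. Unset Strict Implicit. Unset Printing Implicit Defensive.

Section Rec.
Variable T : Type. Variable c0 : T. Variable step : nat -> (nat -> T) -> T.
Fixpoint recL n : seq T := match n with 0 => [:: c0] | n'.+1 => rcons (recL n') (step n' (fun i => nth c0 (recL n') i)) end.
Definition recf n := nth c0 (recL n) n.
Lemma size_recL n : size (recL n) = n.+1.
Proof. by elim: n => [|n IH] //=; rewrite size_rcons IH. Qed.
Lemma nth_recL n i : (i <= n)%N -> nth c0 (recL n) i = recf i.
Proof.
elim: n i => [|n IH] i.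
  by rewrite leqn0 => /eqP ->.
rewrite leq_eqVlt => /orP [/eqP -> //|]; rewrite ltnS => Hi /=.
by rewrite nth_rcons size_recL ltnS Hi IH.
Qed.
Lemma recf0 : recf 0 = c0. Proof. by []. Qed.
Lemma recfS n : (forall phi psi, (forall i, (i <= n)%N -> phi i = psi i) -> step n phi = step n psi) ->
  recf n.+1 = step n recf.
Proof.
move=> H; rewrite /recf /= nth_rcons size_recL ltnn eqxx.
by apply: H => i Hi; rewrite nth_recL.
Qed.
End Rec.

Section P1.
Variable R : idomainType.
Implicit Types f g h : powser R.

Lemma ps_mul0 f g : ps_mul f g 0 = f 0%N * g 0%N.
Proof. by rewrite /ps_mul big_ord_recl big_ord0 addr0. Qed.

Lemma ps_mulS f g n : ps_mul f g n.+1 = f 0%N * g n.+1 + \sum_(i < n.+1) f i.+1 * g (n - i)%N.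
Proof. by rewrite /ps_mul big_ord_recl subn0. Qed.

Lemma ps_mul1 f g : ps_mul f g 1 = f 0%N * g 1%N + f 1%N * g 0%N.
Proof. by rewrite ps_mulS big_ord_recl big_ord0 addr0. Qed.

Lemma ps_unit0 f : ps_unit f -> f 0%N \is a GRing.unit.
Proof. by case=> g /(_ 0%N); rewrite ps_mul0 => H; apply/unitrPr; exists (g 0%N). Qed.

Lemma ps_unitC f : f 0%N \is a GRing.unit -> ps_unit f.
Proof.
move=> Hu.
pose step n (phi : nat -> R) := - (f 0%N)^-1 * \sum_(i < n.+1) f i.+1 * phi (n - i)%N.
exists (recf (f 0%N)^-1 step) => [[|n]].
  by rewrite ps_mul0 recf0 divrr.
rewrite ps_mulS recfS; last first.
  move=> phi psi H; rewrite /step; congr (_ * _); apply: eq_bigr => i _.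
  by rewrite H // leq_subr.
rewrite /step mulrA mulrN mulrV // mulN1r addNr /ps_one /ps_C.
by [].
Qed.

Lemma hensel f a b u v : f 0%N = a * b -> u * a + v * b = 1 ->
  exists g h, ps_eq f (ps_mul g h) /\ g 0%N = a /\ h 0%N = b.
Proof.
move=> Hf Huv.
pose step n (phi : nat -> R * R) :=
  let e := f n.+1 - \sum_(i < n) (phi i.+1).1 * (phi (n - i)%N).2 in (v * e, u * e).
have Hst : forall n phi psi, (forall i, (i <= n)%N -> phi i = psi i) -> step n phi = step n psi.
  move=> n phi psi H; rewrite /step; congr (_ , _); congr (_ * (_ - _));
  apply: eq_bigr => i _; rewrite !H // ?leq_subr //; exact: ltn_ord.
pose r := recf (a, b) step.
exists (fun n => (r n).1), (fun n => (r n).2); split; last by [].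
case=> [|n]; first by rewrite ps_mul0 /= Hf.
rewrite ps_mulS big_ord_recr /= subnn /r (recfS _ (Hst n)) /step /=.
set S := \sum_(i < n) _.
set e := f n.+1 - S.
have -> : a * (u * e) + (S + v * e * b) = (u * a + v * b) * e + S by ring.
by rewrite Huv mul1r /e subrK.
Qed.


Definition cond1 (c : R) := forall a b : R, c = a * b -> comaximal a b ->
        a \is a GRing.unit \/ b \is a GRing.unit.

Lemma part1_fwd f : ps_irreducible f -> f 0%N \isn't a GRing.unit /\ cond1 (f 0%N).
Proof.
case=> _ [Hnu Hirr]; split.
  by apply/negP => /ps_unitC.
move=> a b Hab [u [v Huv]].
have [g [h [Hf [Hg Hh]]]] := hensel Hab Huv.
by case: (Hirr _ _ Hf) => /ps_unit0; [rewrite Hg; left | rewrite Hh; right].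
Qed.

Lemma part1_conv f : f 1%N \is a GRing.unit -> f 0%N \isn't a GRing.unit ->
  cond1 (f 0%N) -> ps_irreducible f.
Proof.
move=> H1 H0 Hc; split; [|split].
- move=> /(_ 1%N); rewrite /ps_zero /ps_C /= => E.
  by move: H1; rewrite E unitr0.
- by move=> /ps_unit0; apply/negP.
move=> g h Hf.
have E0 := Hf 0%N; have E1 := Hf 1%N.
rewrite ps_mul0 in E0; rewrite ps_mul1 in E1.
have Hcm : comaximal (g 0%N) (h 0%N).
  exists ((f 1%N)^-1 * h 1%N), ((f 1%N)^-1 * g 1%N).
  rewrite -!mulrA -mulrDr [h 1%N * _]mulrC -E1 mulVr //.
by case: (Hc _ _ E0 Hcm) => /ps_unitC; [left|right].
Qed.

Lemma ps_X_nonunit : ~ ps_unit (ps_X R).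
Proof. by move=> /ps_unit0; rewrite /ps_X /= unitr0. Qed.

Lemma ps_shiftX f : f 0%N = 0 -> ps_eq f (ps_mul (fun n => f n.+1) (ps_X R)).
Proof.
move=> H0 [|n]; first by rewrite ps_mul0 H0 /ps_X /= mulr0.
rewrite /ps_mul (bigD1 (@Ordinal n.+2 n (leqW (leqnn n.+1)))) //= subSn // subnn /ps_X /= mulr1.
rewrite big1 ?addr0 // => i /eqP Hi.
have : (n.+1 - i)%N != 1%N.
  apply/eqP => E; apply: Hi; apply: val_inj => /=.
  have := ltn_ord i; lia.
by move/negPf => ->; rewrite mulr0.
Qed.

Lemma ps_one_unit : ps_unit (ps_one R).
Proof. by apply: ps_unitC; rewrite /ps_one /ps_C /= unitr1. Qed.

Lemma part3_series (c : R) U : ps_unit U ->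
  let f := ps_add (ps_C c) (ps_mul (ps_X R) U) in f 0%N = c /\ f 1%N \is a GRing.unit.
Proof.
move=> /ps_unit0 HU /=; rewrite /ps_add ps_mul0 ps_mul1 /ps_C /ps_X /=.
by rewrite mul0r addr0 add0r mul1r mul0r add0r.
Qed.

End P1.

Section Alg.
Variable R : idomainType.
Implicit Types a b c d e p q x y : R.

Lemma dvd_refl a : rdvd a a. Proof. by exists 1; rewrite mul1r. Qed.
Lemma dvd_trans a b c : rdvd a b -> rdvd b c -> rdvd a c.
Proof. by move=> [x ->] [y ->]; exists (y * x); rewrite mulrA. Qed.
Lemma dvd_mulr a b c : rdvd a b -> rdvd a (c * b).
Proof. by move=> [x ->]; exists (c * x); rewrite mulrA. Qed.
Lemma dvd_mull a b c : rdvd a b -> rdvd a (b * c).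
Proof. by move=> H; rewrite mulrC; apply: dvd_mulr. Qed.
Lemma dvd0 a : rdvd a 0. Proof. by exists 0; rewrite mul0r. Qed.
Lemma dvd_add a x y : rdvd a x -> rdvd a y -> rdvd a (x + y).
Proof. by move=> [k ->] [l ->]; exists (k + l); rewrite mulrDl. Qed.
Lemma unit_dvd u x : u \is a GRing.unit -> rdvd u x.
Proof. by move=> Hu; exists (x / u); rewrite mulrVK. Qed.
Lemma dvd1_unit e : rdvd e 1 -> e \is a GRing.unit.
Proof. by move=> [c Hc]; apply/unitrPr; exists c; rewrite mulrC. Qed.
Lemma rassoc_dvd a b : rassoc a b -> rdvd b a.
Proof. by move=> [u [_ ->]]; exists u. Qed.
Lemma rassoc_refl a : rassoc a a.
Proof. by exists 1; rewrite unitr1 mul1r. Qed.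
Lemma rassoc_sym a b : rassoc a b -> rassoc b a.
Proof. by move=> [u [Hu ->]]; exists u^-1; rewrite unitrV Hu mulKr. Qed.
Lemma rassoc_dvd' a b : rassoc a b -> rdvd a b.
Proof. by move/rassoc_sym/rassoc_dvd. Qed.
Lemma rassoc_trans a b c : rassoc a b -> rassoc b c -> rassoc a c.
Proof.
move=> [u [Hu ->]] [v [Hv ->]]; exists (u * v); rewrite unitrM Hu Hv mulrA; split=> //.
Qed.
Lemma rassoc_mul a b c d : rassoc a b -> rassoc c d -> rassoc (a * c) (b * d).
Proof.
move=> [u [Hu ->]] [v [Hv ->]]; exists (u * v); rewrite unitrM Hu Hv; split=> //; ring.
Qed.
Lemma rassoc_unit a : a \is a GRing.unit -> rassoc a 1.
Proof. by move=> Ha; exists a; rewrite mulr1. Qed.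
Lemma rassoc1_unit a : rassoc a 1 -> a \is a GRing.unit.
Proof. by move=> [u [Hu ->]]; rewrite mulr1. Qed.

Lemma cancel_r a b c : c != 0 -> a * c = b * c -> a = b.
Proof. by move=> Hc; apply: mulIf. Qed.

Lemma prime_irr p : prime_elt p -> irreducible_elt p.
Proof.
move=> [Hp0 [Hpu Hp]]; split=> //; split=> // b c Hbc.
have : rdvd p (b * c) by rewrite -Hbc; apply: dvd_refl.
case/Hp => [[k Hk]|[k Hk]].
- right; apply/unitrPr; exists k; apply: (@cancel_r _ _ p) => //.
  by rewrite mul1r {2}Hbc Hk; ring.
- left; apply/unitrPr; exists k; apply: (@cancel_r _ _ p) => //.
  by rewrite mul1r {2}Hbc Hk; ring.
Qed.

Lemma comax_sym a b : comaximal a b -> comaximal b a.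
Proof. by move=> [u [v H]]; exists v, u; rewrite addrC. Qed.
Lemma comax_mulr a b c : comaximal a b -> comaximal a c -> comaximal a (b * c).
Proof.
move=> [u [v H]] [u' [v' H']].
exists (u * u' * a + u * v' * c + v * u' * b), (v * v').
rewrite -[1](mulr1 1) -{1}H -H'; ring.
Qed.
Lemma comax_dvdr a b e : comaximal a b -> rdvd e b -> comaximal a e.
Proof. by move=> [u [v H]] [k Hk]; exists u, (v * k); rewrite -H Hk mulrA. Qed.
Lemma comax_1 a : comaximal a 1.
Proof. by exists 0, 1; rewrite mul0r add0r mul1r. Qed.
Lemma comax_unit a w : w \is a GRing.unit -> comaximal a w.
Proof. move=> Hw; apply: (@comax_dvdr _ 1); [exact: comax_1 | exact: unit_dvd]. Qed.

Lemma prime_dvd_pow p q n : prime_elt p -> rdvd p (q ^+ n) -> rdvd p q.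
Proof.
move=> Hp; elim: n => [|n IH].
  by rewrite expr0 => /dvd1_unit; case: Hp => _ [/negP].
rewrite exprS; case: Hp => _ [_ Hp] /Hp [] //.
Qed.

Lemma dvd_ppow p : prime_elt p -> forall k e, rdvd e (p ^+ k) -> exists j, rassoc e (p ^+ j).
Proof.
move=> Hp; have [Hp0 [Hpu Hpp]] := Hp.
elim=> [|k IH] e [g Hg].
  exists 0%N; rewrite expr0; apply: rassoc_unit; apply: dvd1_unit; exists g.
  by rewrite -Hg expr0.
have : rdvd p (g * e) by rewrite -Hg exprS; exists (p ^+ k); rewrite mulrC.
case/Hpp => [[g' Hg']|[e' He']].
- apply: IH; exists g'; apply: (@cancel_r _ _ p) => //.
  by rewrite -[p ^+ k * p]mulrC -exprS Hg Hg'; ring.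
- have [|j Hj] := IH e'.
    exists g; apply: (@cancel_r _ _ p) => //.
    by rewrite -[p ^+ k * p]mulrC -exprS Hg He'; ring.
  exists j.+1; rewrite He' exprS mulrC; apply: rassoc_mul => //; exact: rassoc_refl.
Qed.


Lemma comb_ideal a b : is_ideal (fun z => exists s t, z = s * a + t * b).
Proof.
split; first by exists 0, 0; rewrite !mul0r addr0.
split.
  move=> x y [s [t ->]] [s' [t' ->]]; exists (s + s'), (t + t'); ring.
by move=> r x [s [t ->]]; exists (r * s), (r * t); ring.
Qed.

Section PID.
Hypothesis HP : is_PID R.

Lemma pid_acc (a : nat -> R) : (forall n, rdvd (a n.+1) (a n)) -> exists k, rdvd (a k) (a k.+1).
Proof.
move=> Ha.
have chain : forall k m, rdvd (a (k + m)%N) (a k).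
  move=> k; elim=> [|m IH]; first by rewrite addn0; apply: dvd_refl.
  by rewrite addnS; apply: dvd_trans (Ha _) IH.
pose I z := exists k, rdvd (a k) z.
have Hid : is_ideal I.
  split; first by exists 0%N; apply: dvd0.
  split.
    move=> x y [k Hk] [j Hj]; exists (k + j)%N; apply: dvd_add.
      exact: dvd_trans (chain k j) Hk.
    by rewrite addnC; apply: dvd_trans (chain j k) Hj.
  by move=> r x [k Hk]; exists k; apply: dvd_mulr.
have [d Hd] := HP Hid.
have [k Hk] := (proj2 (Hd d)) (dvd_refl d).
exists k; apply: dvd_trans Hk _; apply/(Hd _); exists k.+1; exact: dvd_refl.
Qed.

Lemma pid_irr_prime p : irreducible_elt p -> prime_elt p.
Proof.
move=> [Hp0 [Hpu Hirr]]; split=> //; split=> // x y [c Hc].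
case: (classic (rdvd p x)) => Hpx; [by left | right].
have [d Hd] := HP (comb_ideal p x).
have [m Hm] : rdvd d p by apply/Hd; exists 1, 0; ring.
case: (Hirr _ _ Hm) => Hu.
- exfalso; apply: Hpx.
  have [k Hk] : rdvd d x by apply/Hd; exists 0, 1; ring.
  exists (k * m^-1); rewrite Hk Hm mulrA -[k * m^-1 * m]mulrA mulVr // mulr1 //.
- have [s [t Hst]] : exists s t, 1 = s * p + t * x by apply/Hd; apply: unit_dvd.
  have E : y = s * p * y + t * (x * y) by rewrite mulrA -mulrDl -Hst mul1r.
  exists (s * y + t * c); rewrite {1}E Hc; ring.
Qed.

Lemma pid_prime_div x : x != 0 -> x \isn't a GRing.unit -> exists p, prime_elt p /\ rdvd p x.
Proof.
move=> Hx0 Hxu; apply: NNPP => Hno.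
pose P (a b : R) := exists c, a = b * c /\ b \isn't a GRing.unit /\ c \isn't a GRing.unit.
pose step a := epsilon (inhabits (0 : R)) (P a).
pose s n := iter n step x.
have HP1 : forall a, a != 0 -> a \isn't a GRing.unit -> rdvd a x -> P a (step a).
  move=> a Ha0 Hau Hax; apply: epsilon_spec.
  apply: NNPP => Hne; apply: Hno; exists a; split=> //; apply: pid_irr_prime.
  split=> //; split=> // b c Hbc.
  case: (boolP (b \is a GRing.unit)) => Hb; first by left.
  case: (boolP (c \is a GRing.unit)) => Hc; first by right.
  by exfalso; apply: Hne; exists b, c.
have HQ : forall n, [/\ s n != 0, s n \isn't a GRing.unit & rdvd (s n) x].
  elim=> [|n [H0 H1 H2]]; first by split=> //; apply: dvd_refl.
  have [c [Hc [Hbu Hcu]]] := HP1 _ H0 H1 H2.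
  have E : s n.+1 = step (s n) by [].
  rewrite E; split.
  - by apply/negP => /eqP E0; move: H0; rewrite Hc E0 mul0r eqxx.
  - exact: Hbu.
  - by apply: (dvd_trans _ H2); exists c; rewrite {1}Hc mulrC.
have [k [e He]] : exists k, rdvd (s k) (s k.+1).
  apply: pid_acc => n; have [H0 H1 H2] := HQ n.
  by have [c [Hc _]] := HP1 _ H0 H1 H2; exists c; rewrite {1}Hc mulrC.
have [H0 H1 H2] := HQ k.
have [c [Hc [_ Hcu]]] := HP1 _ H0 H1 H2.
move/negP: Hcu; apply; apply/unitrPr; exists e.
apply: (@cancel_r _ _ (s k)) => //.
rewrite mul1r {2}Hc; change (step (s k)) with (s k.+1); rewrite He; ring.
Qed.

Lemma pid_comax_prime p c : prime_elt p -> ~ rdvd p c -> comaximal p c.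
Proof.
move=> Hp Hpc; have [_ [_ Hirr]] := prime_irr Hp.
have [d Hd] := HP (comb_ideal p c).
have [m Hm] : rdvd d p by apply/Hd; exists 1, 0; ring.
case: (Hirr _ _ Hm) => Hu.
- exfalso; apply: Hpc.
  have [k Hk] : rdvd d c by apply/Hd; exists 0, 1; ring.
  exists (k * m^-1); rewrite Hk Hm mulrA -[k * m^-1 * m]mulrA mulVr // mulr1 //.
- have [s [t Hst]] : exists s t, 1 = s * p + t * c by apply/Hd; apply: unit_dvd.
  by exists s, t.
Qed.

Lemma pid_main x : x != 0 -> x \isn't a GRing.unit ->
  (forall a b : R, x = a * b -> comaximal a b -> a \is a GRing.unit \/ b \is a GRing.unit) ->
  exists p n, prime_elt p /\ rassoc x (p ^+ n).
Proof.
move=> Hx0 Hxu Hcond.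
have [p [Hp Hpx]] := pid_prime_div Hx0 Hxu.
have [Hp0 [Hpu Hpp]] := Hp.
pose I z := exists k, rdvd x (z * p ^+ k).
have Hid : is_ideal I.
  split; first by exists 0%N; rewrite mul0r; apply: dvd0.
  split.
    move=> z w [k Hk] [j Hj]; exists (k + j)%N.
    have -> : (z + w) * p ^+ (k + j) = (z * p ^+ k) * p ^+ j + (w * p ^+ j) * p ^+ k.
      by rewrite exprD; ring.
    by apply: dvd_add; apply: dvd_mull.
  by move=> r z [k Hk]; exists k; rewrite -mulrA; apply: dvd_mulr.
have [c Hc] := HP Hid.
have [e He] : rdvd c x by apply/Hc; exists 0%N; rewrite expr0 mulr1; apply: dvd_refl.
have Hc0 : c != 0 by apply/negP => /eqP E; move: Hx0; rewrite He E mulr0 eqxx.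
have [k [g Hg]] : I c by apply/Hc; apply: dvd_refl.
have Hpk : p ^+ k = g * e.
  by apply: (@cancel_r _ _ c) => //; rewrite mulrC Hg He mulrA.
have Hpc : ~ rdvd p c.
  move=> [c' Hc'].
  have [h Hh] : rdvd c c'.
    apply/Hc; exists k.+1; exists g; rewrite -Hg Hc' exprS; ring.
  move/negP: Hpu; apply; apply/unitrPr; exists h; apply: (@cancel_r _ _ c) => //.
  by rewrite mul1r {2}Hc' Hh; ring.
have Hcm : comaximal c (p ^+ k).
  elim: (k) => [|j IH]; first by rewrite expr0; apply: comax_1.
  rewrite exprS; apply: comax_mulr => //; apply: comax_sym; exact: pid_comax_prime.
have Hce : comaximal c e by apply: comax_dvdr Hcm _; exists g.
case: (Hcond c e); [by rewrite He mulrC | done | move=> Hcu | move=> Heu].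
- have [j Hj] := dvd_ppow Hp (ex_intro _ g Hpk).
  exists p, j; split=> //; apply: rassoc_trans Hj.
  by exists c; rewrite He mulrC.
- exfalso; apply: Hpc; apply: dvd_trans Hpx _.
  by exists e^-1; rewrite He mulKr.
Qed.
End PID.

Lemma prod_dvd (s : seq R) q : q \in s -> rdvd q (\prod_(p <- s) p).
Proof.
elim: s => [|a s IH] //; rewrite in_cons big_cons => /orP [/eqP ->|/IH H].
  by exists (\prod_(p <- s) p); rewrite mulrC.
exact: dvd_mulr.
Qed.

Section UFD.
Hypothesis HU : is_UFD R.

Lemma ufd_fact a : a != 0 -> exists s, all_irr s /\ rassoc a (\prod_(p <- s) p).
Proof.
move=> Ha; case: (boolP (a \is a GRing.unit)) => Hu.
  by exists [::]; split=> //; rewrite big_nil; apply: rassoc_unit.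
have [s [Hs ->]] := HU.1 a Ha Hu.
by exists s; split=> //; apply: rassoc_refl.
Qed.

Lemma all_irr_cat (s t : seq R) : all_irr s -> all_irr t -> all_irr (s ++ t).
Proof. by move=> Hs Ht q; rewrite mem_cat => /orP [/Hs|/Ht]. Qed.

Lemma ufd_irr_prime p : irreducible_elt p -> prime_elt p.
Proof.
move=> Hpi; have [Hp0 [Hpu Hirr]] := Hpi; split=> //; split=> // x y [c Hc].
case: (eqVneq x 0) => [->|Hx0]; first by left; apply: dvd0.
case: (eqVneq y 0) => [->|Hy0]; first by right; apply: dvd0.
have Hc0 : c != 0.
  by apply/negP => /eqP E; move: (mulf_neq0 Hx0 Hy0); rewrite Hc E mul0r eqxx.
have [s [Hs Hxs]] := ufd_fact Hx0.
have [t [Ht Hyt]] := ufd_fact Hy0.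
have [r [Hr Hcr]] := ufd_fact Hc0.
have Hrp : all_irr (r ++ [:: p]).
  by apply: all_irr_cat => // q; rewrite inE => /eqP ->.
have Hrel : rassoc (\prod_(q <- r ++ [:: p]) q) (\prod_(q <- s ++ t) q).
  rewrite !big_cat big_seq1 /=.
  apply: (@rassoc_trans _ (c * p)); first by apply: rassoc_mul; [apply: rassoc_sym|apply: rassoc_refl].
  by rewrite -Hc; apply: rassoc_mul.
have [Hsz [sg [_ Hsg]]] := HU.2 _ _ Hrp (all_irr_cat Hs Ht) Hrel.
have Hi : (size r < size (r ++ [:: p]))%N by rewrite size_cat addn1.
have := Hsg (Ordinal Hi); rewrite /= nth_cat ltnn subnn /=.
set q := nth 0 (s ++ t) (sg (Ordinal Hi)) => Hpq.
have : q \in s ++ t by apply: mem_nth; exact: ltn_ord.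
rewrite mem_cat => /orP [Hq|Hq]; [left|right]; apply: (dvd_trans (rassoc_dvd' Hpq)).
  by apply: dvd_trans (prod_dvd Hq) (rassoc_dvd Hxs).
by apply: dvd_trans (prod_dvd Hq) (rassoc_dvd Hyt).
Qed.

Lemma ufd_size_lt d s g tg m : all_irr s -> all_irr tg -> rassoc d (\prod_(p <- s) p) ->
  d = m * g -> rassoc g (\prod_(p <- tg) p) -> m != 0 -> m \isn't a GRing.unit ->
  (size tg < size s)%N.
Proof.
move=> Hs Htg Hd Hdm Hg Hm0 Hmu.
have [tm [Htm Hmtm]] := ufd_fact Hm0.
have Hrel : rassoc (\prod_(p <- s) p) (\prod_(p <- tg ++ tm) p).
  apply: (rassoc_trans (rassoc_sym Hd)); rewrite big_cat Hdm mulrC; exact: rassoc_mul.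
have [Hsz _] := HU.2 _ _ Hs (all_irr_cat Htg Htm) Hrel.
rewrite Hsz size_cat; clear Hrel Hsz; case: tm Htm Hmtm => [|q tm] _ Hmtm.
  by rewrite big_nil in Hmtm; move: Hmu; rewrite (rassoc1_unit Hmtm).
by rewrite /= addnS ltnS leq_addr.
Qed.

Section Hyp.
Hypothesis Hyp : forall pi sg : R, prime_elt pi -> prime_elt sg -> ~ rassoc pi sg -> comaximal pi sg.

Lemma ufd_comax p b : irreducible_elt p -> ~ rdvd p b -> comaximal p b.
Proof.
move=> Hp Hpb.
have Hb0 : b != 0 by apply/negP => /eqP E; apply: Hpb; rewrite E; apply: dvd0.
have [t [Ht Hbt]] := ufd_fact Hb0.
have claim : forall t', all_irr t' -> (forall q, q \in t' -> ~ rdvd p q) ->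
    comaximal p (\prod_(q <- t') q).
  elim=> [|q t' IH] Ht' Hnd; first by rewrite big_nil; apply: comax_1.
  rewrite big_cons; apply: comax_mulr.
    apply: Hyp; [exact: ufd_irr_prime | apply: ufd_irr_prime; apply: Ht'; exact: mem_head|].
    by move=> /rassoc_dvd' H; apply: (Hnd q (mem_head _ _)).
  apply: IH => [r Hr|r Hr]; [apply: Ht'|apply: Hnd]; by rewrite in_cons Hr orbT.
apply: comax_dvdr (rassoc_dvd' Hbt); apply: claim => // q Hq Hpq; apply: Hpb.
exact: dvd_trans Hpq (dvd_trans (prod_dvd Hq) (rassoc_dvd Hbt)).
Qed.

Lemma ufd_bezout n : forall a s, all_irr s -> (size s < n)%N -> rassoc a (\prod_(p <- s) p) ->
  forall b, exists g, [/\ rdvd g a, rdvd g b & exists u v, g = u * a + v * b].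
Proof.
elim: n => [|n IH] a s Hs Hsz Has b; first by [].
case: s Hs Hsz Has => [|p s'] Hs Hsz Has.
  rewrite big_nil in Has; have Hu := rassoc1_unit Has.
  exists a; split; [exact: dvd_refl | exact: unit_dvd | by exists 1, 0; ring].
have [w [Hw Ha]] := Has; rewrite big_cons in Ha.
set a' := w * \prod_(q <- s') q.
have Ha' : a = p * a' by rewrite Ha /a'; ring.
have Has' : rassoc a' (\prod_(q <- s') q) by exists w.
have Hs' : all_irr s' by move=> r Hr; apply: Hs; rewrite in_cons Hr orbT.
have Hp : irreducible_elt p by apply: Hs; exact: mem_head.
case: (classic (rdvd p b)) => [[b' Hb']|Hpb].
- have [g' [[k Hk] [l Hl] [u [v Hg']]]] := IH a' s' Hs' Hsz Has' b'.
  exists (p * g'); split.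
  + by exists k; rewrite Ha' Hk; ring.
  + by exists l; rewrite Hb' Hl; ring.
  + by exists u, v; rewrite Hg' Ha' Hb'; ring.
- have [s2 [t2 H2]] := ufd_comax Hp Hpb.
  have [g [Hga' Hgb [u [v Hg]]]] := IH a' s' Hs' Hsz Has' b.
  exists g; split=> //; first by rewrite Ha'; apply: dvd_mulr.
  exists (u * s2), (u * a' * t2 + v).
  rewrite Hg Ha'; transitivity (u * a' * (s2 * p + t2 * b) + v * b); first by rewrite H2 mulr1.
  ring.
Qed.

Lemma ufd_pid : is_PID R.
Proof.
move=> I [I0 [Iadd Imul]].
case: (classic (exists d, I d /\ d != 0)) => [[d [Id0 Hd0]]|Hno]; last first.
  exists 0 => x; split.
    move=> Ix; case: (eqVneq x 0) => [->|Hx]; first exact: dvd0.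
    by exfalso; apply: Hno; exists x.
  by move=> [c ->]; rewrite mulr0.
have [s [Hs Hds]] := ufd_fact Hd0.
suff : forall n d s, I d -> d != 0 -> all_irr s -> (size s < n)%N -> rassoc d (\prod_(p <- s) p) ->
  exists a, forall x, I x <-> rdvd a x by move=> H; exact: (H (size s).+1 d s).
clear Id0 Hd0 Hs Hds d s.
elim=> [|n IHn] d s Hid Hd0 Hs Hsz Hds; first by [].
case: (classic (forall x, I x -> rdvd d x)) => [Hall|Hex].
  by exists d => x; split; [exact: Hall | move=> [c ->]; exact: Imul].
have [x Hx] := not_all_ex_not _ _ Hex.
have [Ix Hdx] := imply_to_and _ _ Hx.
have [g [[m Hm] Hgx [u [v Hg]]]] := ufd_bezout Hs (ltnSn _) Hds x.
have Ig : I g by rewrite Hg; apply: Iadd; apply: Imul.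
have Hg0 : g != 0 by apply/negP => /eqP E; move: Hd0; rewrite Hm E mulr0 eqxx.
have Hm0 : m != 0 by apply/negP => /eqP E; move: Hd0; rewrite Hm E mul0r eqxx.
have Hmu : m \isn't a GRing.unit.
  apply/negP => Hmu; apply: Hdx; apply: dvd_trans Hgx; exists m^-1; rewrite Hm mulKr //.
have [tg [Htg Hgt]] := ufd_fact Hg0.
have Hlt := ufd_size_lt Hs Htg Hds Hm Hgt Hm0 Hmu.
apply: (IHn g tg) => //; apply: leq_trans Hlt _; by [].
Qed.
End Hyp.

Lemma ufd_not_pid : ~ is_PID R -> exists pi sg : R,
  [/\ prime_elt pi, prime_elt sg, ~ rassoc pi sg & ~ comaximal pi sg].
Proof.
move=> HnP; apply: NNPP => Hno; apply: HnP; apply: ufd_pid.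
move=> pi sg Hpi Hsg Hn; apply: NNPP => Hc; apply: Hno; exists pi, sg; by split.
Qed.
End UFD.

End Alg.

Section Final.
Variable R : idomainType.

Lemma cond_pisg (pi sg : R) : prime_elt pi -> prime_elt sg -> ~ comaximal pi sg ->
  forall a b : R, pi * sg = a * b -> comaximal a b -> a \is a GRing.unit \/ b \is a GRing.unit.
Proof.
move=> Hpi Hsg Hc a b E [u [v H]].
have [Hp0 [Hpu Hpp]] := Hpi; have [_ [_ Hsirr]] := prime_irr Hsg.
have : rdvd pi (a * b) by exists sg; rewrite -E mulrC.
case/Hpp => [[a' Ha']|[b' Hb']].
- have Esg : sg = a' * b.
    by apply: (@cancel_r _ _ _ pi) => //; rewrite mulrC E Ha'; ring.
  case: (Hsirr _ _ Esg) => Hu; last by right.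
  exfalso; apply: Hc; have Hb : b = a'^-1 * sg by rewrite Esg (mulKr Hu).
  by exists (u * a'), (v * a'^-1); rewrite -H Ha' Hb; ring.
- have Esg : sg = a * b'.
    by apply: (@cancel_r _ _ _ pi) => //; rewrite mulrC E Hb'; ring.
  case: (Hsirr _ _ Esg) => Hu; first by left.
  exfalso; apply: Hc; have Ha : a = b'^-1 * sg by rewrite Esg [a * b']mulrC (mulKr Hu).
  by exists (v * b'), (u * b'^-1); rewrite -H Hb' Ha; ring.
Qed.

Lemma not_ppow (pi sg : R) : prime_elt pi -> prime_elt sg -> ~ rassoc pi sg ->
  ~ exists (p : R) (n : nat), prime_elt p /\ rassoc (pi * sg) (p ^+ n).
Proof.
move=> Hpi Hsg Hn [p [n [Hp Hr]]].
have Hd : forall q, prime_elt q -> rdvd q (pi * sg) -> rassoc p q.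
  move=> q Hq Hq'; have [m Hm] := prime_dvd_pow Hq (dvd_trans Hq' (rassoc_dvd' Hr)).
  have [_ [_ Hirr]] := prime_irr Hp; have [_ [Hqu _]] := Hq.
  case: (Hirr _ _ Hm) => Hu; first by exists m.
  by move: Hqu; rewrite Hu.
have H1 := Hd pi Hpi (ex_intro _ sg (mulrC _ _)).
have H2 := Hd sg Hsg (ex_intro _ pi (erefl _)).
by apply: Hn; apply: rassoc_trans (rassoc_sym H1) H2.
Qed.

Lemma part3_irr (pi sg : R) : prime_elt pi -> prime_elt sg -> ~ comaximal pi sg ->
  forall U : powser R, ps_unit U ->
  ps_irreducible (ps_add (ps_C (pi * sg)) (ps_mul (ps_X R) U)).
Proof.
move=> Hpi Hsg Hc U HU; have [H0 H1] := part3_series (pi * sg) HU.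
apply: part1_conv => //; rewrite H0.
  by rewrite unitrM; case: Hpi => _ [/negPf -> _].
by move=> a b; apply: cond_pisg.
Qed.
End Final.

Theorem corollary2p3 (R : idomainType) :

  (* (1), forward direction *)
  (forall f : powser R, ps_irreducible f ->
     f 0%N \isn't a GRing.unit /\
     (forall a b : R, f 0%N = a * b -> comaximal a b ->
        a \is a GRing.unit \/ b \is a GRing.unit)) /\
  (* (1), converse *)
  (forall f : powser R, f 1%N \is a GRing.unit -> f 0%N \isn't a GRing.unit ->
     (forall a b : R, f 0%N = a * b -> comaximal a b ->
        a \is a GRing.unit \/ b \is a GRing.unit) ->
     ps_irreducible f) /\
  (* (2) *)
  (is_PID R -> forall f : powser R, ps_irreducible f ->
     ps_assoc f (ps_X R) \/
     exists (p : R) (n : nat), prime_elt p /\ rassoc (f 0%N) (p ^+ n)) /\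
  (* (3) *)
  (is_UFD R -> ~ is_PID R ->
     (exists f : powser R, ps_irreducible f /\ f 0%N != 0 /\
        ~ exists (p : R) (n : nat), prime_elt p /\ rassoc (f 0%N) (p ^+ n)) /\
     (forall pi sg : R, prime_elt pi -> prime_elt sg -> ~ rassoc pi sg ->
        ~ comaximal pi sg ->
        forall U : powser R, ps_unit U ->
          ps_irreducible (ps_add (ps_C (pi * sg)) (ps_mul (ps_X R) U)))).
Proof.
split.
  by move=> f Hf; have [H1 H2] := part1_fwd Hf.
split.
  by move=> f H1 H0 Hc; apply: part1_conv.
split.
  move=> HP f Hf; case: (eqVneq (f 0%N) 0) => H0.
    left; exists (fun n => f n.+1); split; last exact: ps_shiftX.
    have [_ [_ Hirr]] := Hf.
    by case: (Hirr _ _ (ps_shiftX H0)) => // /ps_X_nonunit.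
  right; have [H1 H2] := part1_fwd Hf; exact: pid_main.
move=> HU HnP; have [pi [sg [Hpi Hsg Hn Hc]]] := ufd_not_pid HU HnP; split.
  exists (ps_add (ps_C (pi * sg)) (ps_mul (ps_X R) (ps_one R))).
  have [H0 _] := part3_series (pi * sg) (@ps_one_unit R).
  split; first exact: part3_irr (@ps_one_unit R).
  rewrite H0; split; last exact: not_ppow.
  by apply: mulf_neq0; [case: Hpi | case: Hsg].
by move=> pi' sg' Hpi' Hsg' _ Hc'; apply: part3_irr.
Qed.
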